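(* Let $G=(V,E,\{w_j\})$ be a reduced instance of the line highway problem with $[s,\ell]$-valuation (with $s\ge1$), and let $r=s/\ell$. Let $\mathbf p$ be the price vector output by the algorithm $\mathrm{Line}_{[s,\ell]}$ described in the context. Then \[ \frac{\mathrm{Opt}_{\rm coup}(G)}{\mathbf{E}[\mathrm{Profit}_{\rm coup}(\mathbf p)]}\le \begin{cases} 4(1-\ln r) & 0\le r\le\alpha \text{ or } 1/\sqrt e\le r\le 1,\\ 3/r & \alpha<r\le 1/2,\\ 6 & 1/2<r<1/\sqrt e,\end{cases} \] where $\alpha\approx 0.3824$ is the solution of $3/x=4(1-\ln x)$.
   Context: For integers $a\le b$, $[a,b]=\{a,\dots,b\}$. A reduced instance of the line highway problem is $G=(V,E,\{w_j\})$ with $V=[1,n]$ and a finite multiset of customers $e_j=[j_s,j_t]$ ($1\le j_s\le j_t\le n$) with integer valuations $w_j>0$; it has $[s,\ell]$-valuation if $s=\min_j w_j$, $\ell=\max_j w_j$. For $\mathbf p\in\mathbb R^n$, $p(e_j)=\sum_{i\in e_j}p_i$, $\mathrm{Profit}_{\rm coup}(\mathbf p)=\sum_{j:\,w_j\ge p(e_j)}\max\{p(e_j),0\}$, $\mathrm{Opt}_{\rm coup}(G)=\max_{\mathbf p}\mathrm{Profit}_{\rm coup}(\mathbf p)$. DAG representation: vertices $u_0,\dots,u_n$, arc $u_{j_s-1}\to u_{j_t}$ for each $e_j$; partial sums $(s_0,\dots,s_n)$ give prices $p_i=s_i-s_{i-1}$. Algorithm Line_Random: choose each $s_i$ independently uniformly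 from $\{0,\dots,\ell\}$ and output the resulting prices $\boldsymbol\sigma$. Algorithm Line_Cut: mark each DAG vertex independently with probability $1/2$, let $L$ be marked and $R$ unmarked vertices; for each integer $x\in[s,\ell]$ set partial sum $0$ on $L$ and $x$ on $R$ giving $\boldsymbol\tau_x$; output $\boldsymbol\tau$ maximizing $\mathrm{Profit}_{\rm coup}$ among the $\boldsymbol\tau_x$. Algorithm $\mathrm{Line}_{[s,\ell]}$: run Line_Random to get $\boldsymbol\sigma$, run Line_Cut to get $\boldsymbol\tau$, and output $\mathbf p\in\{\boldsymbol\sigma,\boldsymbol\tau\}$ with $\mathrm{Profit}_{\rm coup}(\mathbf p)=\max\{\mathrm{Profit}_{\rm coup}(\boldsymbol\sigma),\mathrm{Profit}_{\rm coup}(\boldsymbol\tau)\}$. Expectations are over the algorithm's randomness. *)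

(* Defs.v *)
From mathcomp Require Import all_boot all_order all_algebra.
From mathcomp Require Import boolp classical_sets reals.
From mathcomp.analysis Require Import sequences exp.
From Stdlib Require List.
Set Implicit Arguments. Unset Strict Implicit. Unset Printing Implicit Defensive.
Import Order.TTheory GRing.Theory Num.Theory.
Local Open Scope ring_scope.

(* A customer e_j = [js, jt] with integer valuation w_j. *)
Record customer := Customer { cs : nat; ct : nat; cw : nat }.

(* Reduced instance on V = [1,n]: every customer satisfies 1 <= js <= jt <= n
   and w_j > 0.  The multiset of customers is a finite list. *)
Definition reduced_instance (n : nat) (cust : seq customer) : Prop :=
  forall c, List.In c cust -> [/\ (1 <= cs c)%N, (cs c <= ct c)%N, (ct c <= n)%N & (0 < cw c)%N].

Definition has_valuation (cust : seq customer) (s l : nat) : Prop :=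
  (forall c, List.In c cust -> (s <= cw c <= l)%N) /\
  (exists c, List.In c cust /\ cw c = s) /\
  (exists c, List.In c cust /\ cw c = l).

Section Line.
Variable R : realType.
Variable n : nat.
Variable cust : seq customer.

(* Prices: p : 'I_n -> R, where index k : 'I_n stands for item k+1 of [1,n]. *)
Definition price_of (p : 'I_n -> R) (c : customer) : R :=
  \sum_(k < n | (cs c <= k.+1 <= ct c)%N) p k.

Definition profit_coup (p : 'I_n -> R) : R :=
  \sum_(c <- cust | price_of p c <= (cw c)%:R) Num.max (price_of p c) 0.

Definition opt_coup : R := sup (range profit_coup).

(* Prices from partial sums (s_0,...,s_n) (vertex u_i is index i : 'I_n.+1):
   p_{k+1} = s_{k+1} - s_k. *)
Definition prices_of_partial (S : 'I_n.+1 -> R) : 'I_n -> R :=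
  fun k => S (inord k.+1) - S (inord k).

Definition line_random (l : nat) (sv : {ffun 'I_n.+1 -> 'I_l.+1}) : 'I_n -> R :=
  prices_of_partial (fun i => ((sv i : nat)%:R)).

(* tau_x for a marking m (true = marked = in L): partial sum 0 on L, x on R. *)
Definition tau_x (m : {ffun 'I_n.+1 -> bool}) (x : nat) : 'I_n -> R :=
  prices_of_partial (fun i => if m i then 0 else x%:R).

Definition line_cut_profit (s l : nat) (m : {ffun 'I_n.+1 -> bool}) : R :=
  \big[Num.max/0]_(s <= x < l.+1) profit_coup (tau_x m x).

(* Expected profit of the output of Line_[s,l]: the two subroutines use
   independent randomness; the output is the better of sigma and tau. *)
Definition expected_profit_line (s l : nat) : R :=
  ((((l.+1) ^ n.+1 * 2 ^ n.+1)%N)%:R)^-1 *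
  \sum_(sv : {ffun 'I_n.+1 -> 'I_l.+1})
   \sum_(m : {ffun 'I_n.+1 -> bool})
     Num.max (profit_coup (line_random sv)) (line_cut_profit s l m).

End Line.

Definition line_bound (R : realType) (alpha r : R) : R :=
  if r <= alpha then 4 * (1 - ln r)
  else if r <= 1 / 2 then 3 / r
  else if r < 1 / Num.sqrt (expR 1) then 6
  else 4 * (1 - ln r).

(* Main.v *)
Require Import Defs.
From mathcomp Require Import all_boot all_order all_algebra.
From mathcomp Require Import boolp classical_sets reals.
From mathcomp.analysis Require Import sequences exp.
From mathcomp Require Import zify ring lra.
Import Order.TTheory GRing.Theory Num.Theory.
Definition Fw (w i j : nat) : nat := if (i <= j <= i + w) then j - i else 0.
Definition Cn (w m : nat) : nat := \sum_(0 <= i < m) Fw w i m.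
Definition Dn (w l : nat) : nat := \sum_(0 <= i < l.+1) \sum_(0 <= j < l.+1) Fw w i j.

Lemma Cn_eq w m : 2 * Cn w m = minn w m * (minn w m).+1.
Proof.
elim: m => [|m IH]; first by rewrite /Cn big_geq //; lia.
rewrite /Cn big_nat_recl //.
have -> : \sum_(0 <= i < m) Fw w i.+1 m.+1 = Cn w m.
  by apply: eq_bigr => i _; rewrite /Fw ltnS addSn ltnS subSS.
rewrite /Fw /= subn0; move: IH.
case: (leqP m.+1 w) => h IH.
  have e : minn w m = m by lia.
  rewrite e in IH; nia.
have e : minn w m = w by lia.
rewrite e in IH; nia.
Qed.

Lemma Dn_eq w l : 6 * Dn w l = minn w l * (minn w l).+1 * (3 * l + 2 - 2 * minn w l).
Proof.
elim: l => [|l IH].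
  rewrite /Dn big_nat1 big_nat1 /Fw; destruct (0 <= 0 <= 0 + w); lia.
have E : Dn w l.+1 = Dn w l + Cn w l.+1.
  rewrite /Dn big_nat_recr //=.
  have -> : \sum_(0 <= j < l.+2) Fw w l.+1 j = 0.
    rewrite big_nat big1 // => j /andP[_ hj]; rewrite /Fw; case: ifP => // _; lia.
  rewrite addn0 /Cn -big_split /=; apply: eq_bigr => i _.
  by rewrite big_nat_recr.
have C := Cn_eq w l.+1.
rewrite E; move: IH C.
have [h|h] : (w <= l) \/ (l < w) by lia.
  have -> : minn w l = w by lia.
  have -> : minn w l.+1 = w by lia.
  move=> IH C.
  have h1 : 3 * l + 2 - 2 * w = 3 * l + 2 - 2 * w by [].
  nia.
have -> : minn w l = l by lia.
have -> : minn w l.+1 = l.+1 by lia.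
move=> IH C; nia.
Qed.

Lemma natA s w l : (2 * s <= l) -> (s <= w <= l) ->
  2 * s * (l.+1 * l.+1) <= l * ((w.+1) * (3 * l + 2 - 2 * w)).
Proof.
move=> h1 /andP[h2 h3].
have e1 : 2 * (s.+1 * l.+1) <= (w.+1) * (3 * l + 2 - 2 * w).
  have e0 : (s.+1) * (3 * l + 2 - 2 * s) <= (w.+1) * (3 * l + 2 - 2 * w).
    have [t et] : exists t, w = s + t by exists (w - s); lia.
    have [u eu] : exists u, 3 * l = 4 * s + 2 * t + u by exists (3 * l - 4 * s - 2 * t); lia.
    have -> : 3 * l + 2 - 2 * w = 2 * s + u + 2 by lia.
    have -> : 3 * l + 2 - 2 * s = 2 + 2 * s + 2 * t + u by lia.
    rewrite et; nia.
  nia.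
nia.
Qed.

Lemma natB s w l : (l <= 2 * s) -> (s <= w <= l) ->
  l.+1 * l.+1 <= (w.+1) * (3 * l + 2 - 2 * w).
Proof.
move=> h1 /andP[h2 h3].
have [z [v [e1 e2]]] : exists z v, w = z + v /\ l = 2 * z + v.
  by exists (l - w), (2 * w - l); lia.
have -> : 3 * l + 2 - 2 * w = 4 * z + v + 2 by lia.
rewrite e1 e2; nia.
Qed.

Lemma count_ind a b w : a <= w.+1 ->
  \sum_(a <= x < b) (if x <= w then 1 else 0) = minn b w.+1 - a.
Proof.
move=> ha; elim: b => [|b IH]; first by rewrite big_geq //; lia.
case: (leqP a b) => hab.
  rewrite big_nat_recr //= IH; case: ifP => h; lia.
rewrite big_geq //; lia.
Qed.

Local Open Scope ring_scope.
Section Aux.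
Variable R : realType.
Lemma price_partial (n : nat) (S : 'I_n.+1 -> R) (c : customer) :
  (1 <= cs c)%N -> (cs c <= ct c)%N -> (ct c <= n)%N ->
  price_of (prices_of_partial S) c = S (inord (ct c)) - S (inord (cs c).-1).
Proof.
move=> h1 h2 h3; rewrite /price_of /prices_of_partial.
set F := fun k : nat => S (inord k.+1) - S (inord k).
transitivity (\sum_(k < n | (cs c <= k.+1 <= ct c)%N) F k) => //.
rewrite -(big_mkord (fun k => (cs c <= k.+1 <= ct c)%N) F).
rewrite (eq_bigl (fun k => ((cs c).-1 <= k)%N && (k < ct c)%N)); last first.
  by move=> k /=; apply/idP/idP => /andP[? ?]; apply/andP; split; lia.
rewrite -big_nat_widen // big_mkord.
have -> : \sum_(k < ct c | ((cs c).-1 <= k)%N) F k = \sum_((cs c).-1 <= k < ct c) F k.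
  by rewrite big_geq_mkord.
rewrite (telescope_sumr (fun j => S (inord j))) //; lia.
Qed.

Lemma prod2 (I : finType) (a b : I) (F : I -> R) : a != b ->
  \prod_i F i = F a * (F b * \prod_(i | (i != a) && (i != b)) F i).
Proof.
move=> ab; rewrite (bigD1 a) //= (bigD1 b) /=; last by rewrite eq_sym.
congr (_ * (_ * _)); apply: eq_bigl => i; by rewrite andbC.
Qed.

Arguments prod2 {I a b F}.
Lemma sum_pick (T : finType) (x : T) (F : T -> R) :
  \sum_t F t * (x == t)%:R = F x.
Proof.
rewrite (bigD1 x) //= eqxx mulr1 big1 ?addr0 // => t /negbTE.
by rewrite eq_sym => ->; rewrite mulr0.
Qed.

Arguments sum_pick {T}.
Lemma marg2 (I T : finType) (a b : I) (h : T -> T -> R) : a != b ->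
  (#|T|%:R)^+2 * \sum_(f : {ffun I -> T}) h (f a) (f b) =
  (#|T|%:R)^+#|I| * \sum_x \sum_y h x y.
Proof.
move=> ab.
pose G (x y : T) (i : I) (t : T) : R := if i == a then (t == x)%:R else if i == b then (t == y)%:R else 1.
have E1 : forall f : {ffun I -> T}, h (f a) (f b) =
    \sum_x \sum_y h x y * \prod_i G x y i (f i).
  move=> f; rewrite -(sum_pick (f a) (fun x => h x (f b))).
  apply: eq_bigr => x _; rewrite -(sum_pick (f b) (fun y => h x y)) mulr_suml.
  apply: eq_bigr => y _; rewrite (prod2 ab) /G.
  have nba : (b == a) = false by rewrite eq_sym (negbTE ab).
  rewrite nba !eqxx big1 ?mulr1; last first.
    by move=> i /andP[/negbTE -> /negbTE ->].
  by rewrite -mulrA [_ * (f a == x)%:R]mulrC.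
have E2 : forall x y, \sum_(f : {ffun I -> T}) \prod_i G x y i (f i) =
    \prod_(i | (i != a) && (i != b)) (#|T|%:R : R).
  move=> x y; rewrite -bigA_distr_bigA (prod2 ab) /G.
  have nba : (b == a) = false by rewrite eq_sym (negbTE ab).
  rewrite nba !eqxx.
  have -> : \sum_t ((t == x)%:R : R) = 1.
    by rewrite (eq_bigr (fun t => (fun=> (1:R)) t * (x == t)%:R)) ?sum_pick // => t _; rewrite mul1r eq_sym.
  have -> : \sum_t ((t == y)%:R : R) = 1.
    by rewrite (eq_bigr (fun t => (fun=> (1:R)) t * (y == t)%:R)) ?sum_pick // => t _; rewrite mul1r eq_sym.
  rewrite !mul1r; apply: eq_bigr => i /andP[/negbTE -> /negbTE ->].
  by rewrite sumr_const //.
under eq_bigr do rewrite E1.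
rewrite exchange_big /=.
under eq_bigr do rewrite exchange_big /=.
rewrite mulr_sumr mulr_sumr; apply: eq_bigr => x _; rewrite !mulr_sumr; apply: eq_bigr => y _.
rewrite -mulr_sumr E2.
have -> : (#|T|%:R : R) ^+ #|I| = \prod_(i : I) (#|T|%:R : R).
  by rewrite prodr_const cardT -cardE.
rewrite (prod2 ab); ring.
Qed.

End Aux.

Set Implicit Arguments. Unset Strict Implicit. Unset Printing Implicit Defensive.
Local Open Scope ring_scope.

Section Aux2.
Variable R : realType.

Lemma eq_sum_In (r : seq customer) (F G : customer -> R) :
  (forall c, List.In c r -> F c = G c) -> \sum_(c <- r) F c = \sum_(c <- r) G c.
Proof.
elim: r => [|c r IH] H; first by rewrite !big_nil.
rewrite !big_cons H /=; last by left.
by rewrite IH // => d hd; apply: H; right.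
Qed.

Lemma ler_sum_In (r : seq customer) (F G : customer -> R) :
  (forall c, List.In c r -> F c <= G c) -> \sum_(c <- r) F c <= \sum_(c <- r) G c.
Proof.
elim: r => [|c r IH] H; first by rewrite !big_nil.
rewrite !big_cons lerD //; first by apply: H; left.
by apply: IH => d hd; apply: H; right.
Qed.

Definition contrib n (p : 'I_n -> R) (c : customer) : R :=
  if price_of p c <= (cw c)%:R then Num.max (price_of p c) 0 else 0.

Lemma profitE n cust (p : 'I_n -> R) :
  profit_coup cust p = \sum_(c <- cust) contrib p c.
Proof. by rewrite /profit_coup big_mkcond. Qed.

Lemma contrib_ge0 n (p : 'I_n -> R) c : 0 <= contrib p c.
Proof. by rewrite /contrib; case: ifP => _; rewrite ?le_max ?lexx ?orbT. Qed.

Lemma contrib_le n (p : 'I_n -> R) c : contrib p c <= (cw c)%:R.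
Proof.
rewrite /contrib; case: ifP => h //.
by rewrite ge_max h ler0n.
Qed.

Lemma g_nat (w : nat) (x y : nat) :
  (let pr := (y%:R - x%:R : R) in if pr <= w%:R then Num.max pr 0 else 0) =
  (Fw w x y)%:R.
Proof.
rewrite /Fw /=; case: (leqP x y) => hxy.
  case: (leqP y (x + w)) => hyw.
    rewrite -natrB // ler_nat; have -> : (y - x <= w)%N by lia.
    by rewrite max_l // ler0n.
  have hw : ~~ (y%:R - x%:R <= w%:R :> R).
    rewrite -natrB // ler_nat; lia.
  by rewrite (negbTE hw).
have -> : (y%:R - x%:R <= w%:R :> R).
  have : (y%:R < x%:R :> R) by rewrite ltr_nat.
  have : (0 <= w%:R :> R) by rewrite ler0n.
  lra.
rewrite max_r //.
have : (y%:R < x%:R :> R) by rewrite ltr_nat.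
lra.
Qed.

Definition gfun (w : nat) (k : nat) (x y : 'I_k) : R :=
  let pr := ((y : nat)%:R - (x : nat)%:R : R) in if pr <= w%:R then Num.max pr 0 else 0.

Lemma ab_ne n c : (1 <= cs c)%N -> (cs c <= ct c)%N -> (ct c <= n)%N ->
  (inord (cs c).-1 : 'I_n.+1) != inord (ct c).
Proof.
move=> h1 h2 h3; apply/eqP => /(congr1 val) /=; rewrite !inordK; lia.
Qed.

Lemma random_sum n l cust : reduced_instance n cust ->
  ((l.+1)%:R : R)^+2 * \sum_(sv : {ffun 'I_n.+1 -> 'I_l.+1}) profit_coup cust (line_random R sv)
  = ((l.+1)%:R)^+(n.+1) * \sum_(c <- cust) ((Dn (cw c) l)%:R).
Proof.
move=> Hred.
under eq_bigr do rewrite profitE.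
rewrite exchange_big /= !mulr_sumr; apply: eq_sum_In => c hc.
have [h1 h2 h3 h4] := Hred c hc.
have ab := ab_ne h1 h2 h3.
have E : forall sv : {ffun 'I_n.+1 -> 'I_l.+1}, contrib (line_random R sv) c =
    gfun (cw c) (sv (inord (cs c).-1)) (sv (inord (ct c))).
  by move=> sv; rewrite /contrib /line_random price_partial.
under eq_bigr do rewrite E.
have M := @marg2 R _ _ _ _ (@gfun (cw c) l.+1) ab; rewrite !card_ord in M; rewrite M.
congr (_ * _); rewrite /Dn natr_sum big_mkord; apply: eq_bigr => x _.
rewrite natr_sum big_mkord; apply: eq_bigr => y _.
by rewrite -g_nat.
Qed.

Definition gcut (w x : nat) (u v : bool) : R :=
  let pr := ((if v then 0 else x%:R) - (if u then 0 else x%:R) : R) in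
  if pr <= w%:R then Num.max pr 0 else 0.

Lemma gcut_ge0 w x u v : 0 <= gcut w x u v.
Proof. by rewrite /gcut; case: ifP => _; rewrite ?le_max ?lexx ?orbT. Qed.

Lemma cut_sum n cust x : reduced_instance n cust ->
  (2 ^+ (n.+1) : R) * \sum_(c <- cust) (if (x <= cw c)%N then x%:R else 0)
  <= 4 * \sum_(m : {ffun 'I_n.+1 -> bool}) profit_coup cust (tau_x R m x).
Proof.
move=> Hred.
under [X in _ <= _ * X]eq_bigr do rewrite profitE.
rewrite exchange_big /= !mulr_sumr; apply: ler_sum_In => c hc.
have [h1 h2 h3 h4] := Hred c hc.
have ab := ab_ne h1 h2 h3.
have E : forall m : {ffun 'I_n.+1 -> bool}, contrib (tau_x R m x) c =
    gcut (cw c) x (m (inord (cs c).-1)) (m (inord (ct c))).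
  by move=> m; rewrite /contrib /tau_x price_partial.
under [X in _ <= _ * X]eq_bigr do rewrite E.
have M := @marg2 R _ _ _ _ (gcut (cw c) x) ab; rewrite card_bool card_ord in M.
have -> : (4 : R) = 2%:R ^+ 2 by rewrite expr2 -natrM.
rewrite M; apply: ler_wpM2l; first by rewrite exprn_ge0 // ler0n.
rewrite !big_bool /=.
have -> : gcut (cw c) x true false = if (x <= cw c)%N then x%:R else 0.
  rewrite /gcut /= subr0 ler_nat; case: ifP => // _; by rewrite max_l // ler0n.
have := gcut_ge0 (cw c) x true true; have := gcut_ge0 (cw c) x false true;
have := gcut_ge0 (cw c) x false false; set t := (if _ then _ else _); lra.
Qed.

Lemma E_random n cust s l : reduced_instance n cust ->
  (\sum_(c <- cust) (Dn (cw c) l)%:R) / ((l.+1)%:R ^+ 2)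
   <= expected_profit_line R n cust s l.
Proof.
move=> Hred; rewrite /expected_profit_line natrM !natrX.
set K := ((l.+1)%:R : R); set P := ((2%:R : R) ^+ n.+1).
set S := \sum_(sv : {ffun 'I_n.+1 -> 'I_l.+1}) profit_coup cust (line_random R sv).
set TOT := \sum_(sv : {ffun 'I_n.+1 -> 'I_l.+1}) _.
have H1 : P * S <= TOT.
  rewrite /S mulr_sumr; apply: ler_sum => sv _.
  have -> : P * profit_coup cust (line_random R sv) =
      \sum_(m : {ffun 'I_n.+1 -> bool}) profit_coup cust (line_random R sv).
    by rewrite sumr_const card_ffun card_bool card_ord -mulr_natl natrX.
  by apply: ler_sum => m _; rewrite le_max lexx.
have RS := random_sum l Hred; rewrite -/K -/S in RS.
have K0 : K != 0 by rewrite pnatr_eq0.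
have P0 : P != 0 by rewrite expf_eq0 pnatr_eq0 andbF.
have -> : \sum_(c <- cust) ((Dn (cw c) l)%:R : R) = K ^+ 2 * S / K ^+ n.+1.
  by rewrite RS; field; rewrite expf_eq0 (negbTE K0) andbF.
apply: (le_trans _ (ler_wpM2l _ H1)); last first.
  by rewrite invr_ge0 mulr_ge0 // exprn_ge0 // ler0n.
rewrite [X in X <= _](_ : _ = (K ^+ n.+1 * P)^-1 * (P * S)) //.
field; rewrite ?P0 ?expf_eq0 ?(negbTE K0) ?andbF //. rewrite /= paddr_eq0 ?ler0n // oner_eq0. by [].
Qed.

Lemma bigmax_ge (r : seq nat) (F : nat -> R) x0 :
  x0 \in r -> F x0 <= \big[Num.max/0]_(i <- r) F i.
Proof.
elim: r => // i r IH; rewrite in_cons big_cons => /orP[/eqP->|h].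
  by rewrite le_max lexx.
by rewrite le_max IH // orbT.
Qed.

Lemma E_cut n cust s l x : reduced_instance n cust -> (s <= x <= l)%N ->
  (\sum_(c <- cust) (if (x <= cw c)%N then x%:R else 0)) / 4
   <= expected_profit_line R n cust s l.
Proof.
move=> Hred hx; rewrite /expected_profit_line natrM !natrX.
set K := ((l.+1)%:R : R); set P := ((2%:R : R) ^+ n.+1).
set S := \sum_(m : {ffun 'I_n.+1 -> bool}) profit_coup cust (tau_x R m x).
set TOT := \sum_(sv : {ffun 'I_n.+1 -> 'I_l.+1}) _.
have H1 : K ^+ n.+1 * S <= TOT.
  have -> : K ^+ n.+1 * S = \sum_(sv : {ffun 'I_n.+1 -> 'I_l.+1}) S.
    by rewrite sumr_const card_ffun !card_ord -mulr_natl natrX.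
  apply: ler_sum => sv _; apply: ler_sum => m _.
  rewrite le_max; apply/orP; right; rewrite /line_cut_profit.
  apply: (bigmax_ge (fun y => profit_coup cust (tau_x R m y))).
  by rewrite mem_index_iota; lia.
have CS := cut_sum x Hred; rewrite -/S -/P in CS.
have K0 : K != 0 by rewrite pnatr_eq0.
have P0 : P != 0 by rewrite expf_eq0 pnatr_eq0 andbF.
have KP : 0 < K ^+ n.+1 * P.
  by rewrite mulr_gt0 // exprn_gt0 // ltr0n.
apply: (le_trans _ (ler_wpM2l _ H1)); last by rewrite invr_ge0 ltW.
rewrite mulrA [_^-1 * _]mulrC invfM mulrA divff ?expf_neq0 // mul1r.
rewrite [P^-1 * S]mulrC ler_pdivlMr ?exprn_gt0 ?ltr0n //.
set C := \sum_(c <- cust) _ in CS *.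
have -> : C / 4 * P = (P * C) / 4 by rewrite mulrC mulrA.
by rewrite ler_pdivrMr ?ltr0n // [S * _]mulrC.
Qed.

Lemma harm_step (m : nat) : (0 < m)%N ->
  ((m.+1)%:R : R)^-1 <= ln (m.+1)%:R - ln m%:R.
Proof.
move=> hm.
have hM : (0 : R) < (m.+1)%:R by rewrite ltr0n.
have hm' : (0 : R) < m%:R by rewrite ltr0n.
have h1 : -1 < - ((m.+1)%:R : R)^-1.
  rewrite ltrN2 invf_lt1 // ltr1n; lia.
have := le_ln1Dx h1.
have -> : 1 - ((m.+1)%:R : R)^-1 = m%:R / (m.+1)%:R.
  rewrite -natr1; field; rewrite natr1 lt0r_neq0 //.
rewrite ln_div ?posrE //; set i := (m.+1%:R)^-1; set p := ln m.+1%:R; set q := ln m%:R; lra.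
Qed.

Lemma harm (s d : nat) : (0 < s)%N ->
  \sum_(s.+1 <= x < (s + d).+1) ((x%:R : R)^-1) <= ln ((s + d)%:R) - ln (s%:R).
Proof.
move=> hs; elim: d => [|d IH].
  by rewrite addn0 big_geq // subrr.
rewrite addnS big_nat_recr /=; last lia.
have H : (((s+d).+1)%:R : R)^-1 <= ln ((s+d).+1)%:R - ln (s+d)%:R.
  by apply: harm_step; lia.
move: IH H; set S := \sum_(_ <= _ < _) _; set i := _^-1; set p := ln _; set q := ln _; set o := ln _; lra.
Qed.

Lemma opt_le_W n cust :
  opt_coup R n cust <= \sum_(c <- cust) ((cw c)%:R : R).
Proof.
rewrite /opt_coup; apply: ge_sup.
  by exists (profit_coup cust (fun _ : 'I_n => (0 : R))); exists (fun _ => 0).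
move=> y [p _ <-]; rewrite profitE; apply: ler_sum => c _; exact: contrib_le.
Qed.

Lemma cut_bound n cust s l : reduced_instance n cust ->
  (forall c, List.In c cust -> (s <= cw c <= l)%N) -> (1 <= s)%N -> (s <= l)%N ->
  \sum_(c <- cust) ((cw c)%:R : R) <=
    4 * (1 - ln ((s%:R : R) / l%:R)) * expected_profit_line R n cust s l.
Proof.
move=> Hred Hb hs hsl.
set E := expected_profit_line R n cust s l.
pose C x : R := \sum_(c <- cust) (if (x <= cw c)%N then x%:R else 0).
have HC : forall x, (s <= x <= l)%N -> C x <= 4 * E.
  move=> x hx; have := E_cut Hred hx; rewrite -/E /C.
  set t := \sum_(_ <- _) _; move=> H; lra.
have E0 : 0 <= E.
  have := HC s; rewrite leqnn hsl /= => /(_ isT).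
  have : 0 <= C s by apply: sumr_ge0 => c _; case: ifP => _; rewrite ?ler0n.
  lra.
have Hw : forall c, List.In c cust -> ((cw c)%:R : R) =
    s%:R + \sum_(s.+1 <= x < l.+1) (if (x <= cw c)%N then 1 else 0 : R).
  move=> c hc; have /andP[h1 h2] := Hb c hc.
  have e : (\sum_(s.+1 <= x < l.+1) (if (x <= cw c) then 1 else 0))%N =
      (minn l.+1 (cw c).+1 - s.+1)%N by apply: count_ind; lia.
  have -> : \sum_(s.+1 <= x < l.+1) (if (x <= cw c)%N then 1 else 0 : R) =
      ((\sum_(s.+1 <= x < l.+1) (if (x <= cw c)%N then 1 else 0))%N)%:R.
    by rewrite natr_sum; apply: eq_bigr => x _; case: ifP.
  rewrite e -natrD; congr (_%:R); lia.
have HW : \sum_(c <- cust) ((cw c)%:R : R) =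
    C s + \sum_(s.+1 <= x < l.+1) (C x / x%:R).
  rewrite (eq_sum_In Hw) big_split /=; congr (_ + _).
    rewrite /C; apply: eq_sum_In => c hc; have /andP[h1 _] := Hb c hc.
    by rewrite h1.
  rewrite exchange_big /=; apply: eq_big_nat => x /andP[hx _].
  rewrite /C mulr_suml; apply: eq_bigr => c _; case: ifP => _; last by rewrite mul0r.
  by rewrite divff // pnatr_eq0 -lt0n; lia.
have H1 : \sum_(s.+1 <= x < l.+1) (C x / x%:R) <=
    4 * E * \sum_(s.+1 <= x < l.+1) ((x%:R : R)^-1).
  rewrite mulr_sumr; apply: ler_sum_nat => x /andP[hx1 hx2].
  apply: ler_wpM2r; first by rewrite invr_ge0 ler0n.
  by apply: HC; lia.
have H2 := harm (l - s) hs; rewrite subnKC // in H2.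
have -> : ln ((s%:R : R) / l%:R) = ln s%:R - ln l%:R.
  by rewrite ln_div // posrE ltr0n; lia.
rewrite HW.
have HCs := HC s; rewrite leqnn hsl /= in HCs; have {}HCs := HCs isT.
move: H1 H2 HCs E0.
set Hs := \sum_(_ <= _ < _) (_ : R)^-1.
set T := \sum_(_ <= _ < _) _.
set a := ln _; set b := ln _; set Cs := C s.
move=> H1 H2 HCs E0.
have : 4 * E * Hs <= 4 * E * (a - b) by apply: ler_wpM2l => //; lra.
nra.
Qed.

Lemma rand_bound n cust s l (beta : R) : reduced_instance n cust -> 0 <= beta ->
  (forall c, List.In c cust ->
     ((cw c)%:R : R) * ((l.+1)%:R ^+ 2) <= beta * (Dn (cw c) l)%:R) ->
  \sum_(c <- cust) ((cw c)%:R : R) <= beta * expected_profit_line R n cust s l.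
Proof.
move=> Hred hb Hc.
apply: (le_trans _ (ler_wpM2l hb (E_random s l Hred))).
have K0 : (0 : R) < (l.+1)%:R ^+ 2 by rewrite exprn_gt0 // ltr0n.
rewrite mulrA mulr_sumr mulr_suml; apply: ler_sum_In => c hc.
by rewrite ler_pdivlMr //; exact: Hc.
Qed.

End Aux2.

Unset Implicit Arguments.
Theorem theorem3 (R : realType) (n : nat) (cust : seq customer) (s l : nat)
  (alpha : R) :
  reduced_instance n cust ->
  has_valuation cust s l ->
  (1 <= s)%N ->
  0 < alpha < 1 -> 3 / alpha = 4 * (1 - ln alpha) ->
  opt_coup R n cust <=
    line_bound alpha ((s%:R : R) / (l%:R)) * expected_profit_line R n cust s l.
Proof.
move=> Hred [Hb [[c0 [hc0 e0]] _]] hs _ _.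
have hsl : (s <= l)%N by have := Hb c0 hc0; rewrite e0; lia.
have hl : (0 < l)%N by lia.
have sR : (0 : R) < s%:R by rewrite ltr0n.
have lR : (0 : R) < l%:R by rewrite ltr0n.
apply: (le_trans (opt_le_W R n cust)).
rewrite /line_bound; case: ifP => h1; first exact: cut_bound.
case: ifP => h2.
  have h2' : (2 * s <= l)%N.
    rewrite ler_pdivrMr // in h2.
    rewrite -(ler_nat R) natrM; lra.
  apply: rand_bound => //; first by rewrite divr_ge0 // divr_ge0 // ler0n.
  move=> c hc; have /andP[hw1 hw2] := Hb c hc.
  have N : (2 * s * (cw c * (l.+1 * l.+1)) <= l * (6 * Dn (cw c) l))%N.
    rewrite Dn_eq (minn_idPl hw2).
    have := leq_mul (leqnn (cw c)) (natA s (cw c) l h2' (_ : (s <= cw c <= l)%N)).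
    rewrite hw1 hw2 => /(_ isT) H; nia.
  have NR := N; rewrite -(ler_nat R) !natrM in NR.
  have -> : 3 / ((s%:R : R) / l%:R) * (Dn (cw c) l)%:R =
      (3 * l%:R * (Dn (cw c) l)%:R) / s%:R.
    by field; rewrite !lt0r_neq0.
  rewrite ler_pdivlMr //.
  move: NR; set D := (Dn (cw c) l)%:R; set w := (cw c)%:R; set K := (l.+1)%:R.
  move=> NR; nra.
case: ifP => h3; last exact: cut_bound.
have h2' : (l < 2 * s)%N.
  have : 1 / 2 < (s%:R : R) / l%:R by rewrite ltNge h2.
  rewrite ltr_pdivlMr // => H.
  rewrite -(ltr_nat R) natrM; lra.
apply: rand_bound => //.
move=> c hc; have /andP[hw1 hw2] := Hb c hc.
have N : (cw c * (l.+1 * l.+1) <= 6 * Dn (cw c) l)%N.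
  rewrite Dn_eq (minn_idPl hw2).
  have := leq_mul (leqnn (cw c)) (natB s (cw c) l (ltnW h2') (_ : (s <= cw c <= l)%N)).
  rewrite hw1 hw2 => /(_ isT) H; nia.
have NR := N; rewrite -(ler_nat R) !natrM in NR.
move: NR; set D := (Dn (cw c) l)%:R; set w := (cw c)%:R; set K := (l.+1)%:R.
move=> NR; nra.
Qed.
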